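(* Let $K$ be a finite field and $n>1$. A $K$-linear code $\mathcal{C}\subseteq K^n$ is a quasi-$G$ code (of some index) for some nontrivial finite group $G$ if and only if it is a quasi-cyclic code, i.e. a quasi-$C$ code for some nontrivial finite cyclic group $C$. In other words, the class of quasi group codes of length $n>1$ with respect to nontrivial groups coincides with the class of quasi-cyclic codes of length $n>1$.
   Context: For a finite group $G$, a quasi-$G$ code of index $\ell$ is a $K$-linear code in $K^{\ell|G|}$ which, under some identification of the coordinate set with $\{1,\ldots,\ell\}\times G$ (equivalently, of $K^{\ell|G|}$ with $KG^\ell=KG\oplus\cdots\oplus KG$, each $KG$ identified with $K^{|G|}$ via $\sum_i a_ig_i\mapsto(a_i)_i$), is a right $KG$-submodule of $KG^\ell$. A quasi-cyclic code of index $\ell$ is a quasi-$G$ code of index $\ell$ with $G$ cyclic. *)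

(* Defs.v *)
From HB Require Import structures.
From mathcomp Require Import all_boot all_order all_algebra all_fingroup all_solvable all_field.
Set Implicit Arguments. Unset Strict Implicit. Unset Printing Implicit Defensive.
Import GRing.Theory.
Local Open Scope ring_scope.

(* C is a quasi-G code of index l (G = the whole finite group gT) if there is
   a bijection f : {1..l} x G -> {1..n} of coordinates (identifying K^n with
   KG^l, the coordinate (i,h) being the coefficient of h in the i-th KG
   component) such that C is a right KG-submodule, i.e. (being already a
   K-subspace) stable under right multiplication by every g in G:
   (sum_h a_{i,h} h) g = sum_h a_{i,h g^-1} h. *)
Definition quasi_group_code_of_index (K : fieldType) (n : nat)
    (gT : finGroupType) (l : nat) (C : {vspace 'rV[K]_n}) : Prop :=
  exists f : 'I_l * gT -> 'I_n,
    bijective f /\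
    forall v : 'rV[K]_n, v \in C -> forall g : gT,
      exists2 w : 'rV[K]_n, w \in C &
        forall (i : 'I_l) (h : gT), w 0 (f (i, h)) = v 0 (f (i, (h * g^-1)%g)).

Definition quasi_group_code (K : fieldType) (n : nat)
    (gT : finGroupType) (C : {vspace 'rV[K]_n}) : Prop :=
  exists l : nat, quasi_group_code_of_index gT l C.

(* Main.v *)
Require Import Defs.
From HB Require Import structures.
From mathcomp Require Import all_boot all_order all_algebra all_fingroup all_solvable all_field.
Import GRing.Theory.
Local Open Scope group_scope.

Section Restr.
Variables (K : fieldType) (n : nat) (gT : finGroupType) (H : {group gT}) (l : nat).
Variable C : {vspace 'rV[K]_n}.

Definition reps := {r : gT | r == repr (r *: H)}.
Definition Tt := ('I_l * reps)%type.

Definition phi (p : Tt * subg_of H) : 'I_l * gT :=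
  (p.1.1, val p.1.2 * sgval p.2)%g.

Lemma repr_in (h : gT) : repr (h *: H) \in h *: H.
Proof. apply: (@mem_repr _ _ h); exact: lcoset_refl. Qed.

Lemma repr_ok (h : gT) : repr (h *: H) == repr (repr (h *: H) *: H).
Proof. by rewrite (lcoset_eqP (repr_in h)). Qed.

Definition phiinv (q : 'I_l * gT) : Tt * subg_of H :=
  ((q.1, exist _ (repr (q.2 *: H)) (repr_ok q.2)),
   subg H ((repr (q.2 *: H))^-1 * q.2)%g).

Lemma inv_in (h : gT) : ((repr (h *: H))^-1 * h \in H)%g.
Proof.
have := repr_in h; rewrite mem_lcoset => Hr.
by rewrite -[X in X \in _]invgK invMg invgK groupV.
Qed.

Lemma phiK : cancel phi phiinv.
Proof.
move=> [[i [r Pr]] k]; rewrite /phi /phiinv /=.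
have E : (r * sgval k) *: H = r *: H.
  by apply/lcoset_eqP; rewrite mem_lcoset mulKg subgP.
have Er : repr ((r * sgval k) *: H) = r by rewrite E -(eqP Pr).
congr (_, _).
  congr (_, _); apply: val_inj => /=; exact: Er.
apply: val_inj; rewrite /= Er subgK; first by rewrite mulKg.
by rewrite mulKg subgP.
Qed.

Lemma phiinvK : cancel phiinv phi.
Proof.
move=> [i h]; rewrite /phi /phiinv /= subgK ?inv_in //.
by rewrite mulKVg.
Qed.

End Restr.

Lemma restr_code (K : fieldType) (n : nat) (gT : finGroupType) (H : {group gT})
   (C : {vspace 'rV[K]_n}) : quasi_group_code gT C -> quasi_group_code (subg_of H) C.
Proof.
move=> [l [f [fbij finv]]].
exists #|{: @Tt gT H l}|.
pose f' := fun p : 'I_#|{: @Tt gT H l}| * subg_of H => f (@phi gT H l (enum_val p.1, p.2)).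
exists f'; split.
  apply: (bij_comp fbij).
  pose u := fun p : 'I_#|{: @Tt gT H l}| * subg_of H => (enum_val p.1, p.2).
  have -> : (fun p : 'I_#|{: @Tt gT H l}| * subg_of H => @phi gT H l (enum_val p.1, p.2)) = @phi gT H l \o u by [].
  apply: bij_comp; first by exists (@phiinv gT H l); [exact: (@phiK gT H l) | exact: (@phiinvK gT H l)].
  exists (fun q : @Tt gT H l * subg_of H => (enum_rank q.1, q.2)).
    by move=> [a b]; rewrite /u /= enum_valK.
  by move=> [a b]; rewrite /u /= enum_rankK.
move=> v vC g.
have [w wC Hw] := finv v vC (sgval g).
exists w => // j k; rewrite /f' /phi /= Hw.
by rewrite -mulgA.
Qed.

Theorem mainTheorem3 (K : finFieldType) (n : nat) (C : {vspace 'rV[K]_n}) :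
  1 < n ->
  ((exists gT : finGroupType, 1 < #|gT| /\ quasi_group_code gT C) <->
   (exists gT : finGroupType,
       [/\ 1 < #|gT|, cyclic [set: gT] & quasi_group_code gT C])).
Proof.
move=> _; split; last by move=> [gT [h1 _ h3]]; exists gT.
move=> [gT [h1 hq]].
have : [set: gT] :!=: 1%g by rewrite trivg_card1 cardsT; case: #|gT| h1 => [|[]].
case/trivgPn => x _ x1.
exists (subg_of <[x]>%G); split; last exact: restr_code.
- rewrite -cardsT -(card_isog (isog_subg <[x]>%G)).
  rewrite ltnNge; apply/negP => hle.
  have : <[x]> == 1%g :> {set gT}.
    by rewrite trivg_card1 eqn_leq hle cardG_gt0.
  by rewrite cycle_eq1 (negPf x1).
- by rewrite -(isog_cyclic (isog_subg <[x]>%G)) cycle_cyclic.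
Qed.
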